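(* Let $n\ge 2$ and let $f$ be the $n$-ary operation on $\mathbb{Z}_8$ given by $f(\mathbf{x})=x_1x_2\cdots x_n\sum_{\alpha\in I_n}b_\alpha\mathbf{x}^\alpha$ with $b_\alpha\in\mathbb{Z}_8$. Then $f$ preserves the relation $Z$ if and only if every $b_\alpha$ is even.
   Context: $I_n$ is the set of all $n$-tuples $\alpha\in\{0,1,2\}^n$ with at most two nonzero components, and $\mathbf{x}^\alpha=x_1^{\alpha_1}\cdots x_n^{\alpha_n}$. $P_4$ is the power set of $\{1,2,3,4\}$. For $A\in P_4$, $\mathbf{g}^A\in\mathbb{Z}_8^{P_4}$ is the tuple with $B$-component $1$ if $A\subseteq B$ and $0$ otherwise. Every $\mathbf{u}\in\mathbb{Z}_8^{P_4}$ has a unique expression $\mathbf{u}=\sum_{A\in P_4}a_A\mathbf{g}^A$ with $a_A\in\mathbb{Z}_8$. $Z\subseteq \mathbb{Z}_8^{P_4}$ consists of all $\mathbf{u}$ whose coefficients satisfy: (Z1) $a_{\{2\}}\equiv 2a_{\{1\}}\pmod 4$ and $a_{\{4\}}\equiv 2a_{\{3\}}\pmod 4$; (Z2) $a_A\equiv 0\pmod 2$ whenever $|A|\ge 2$; (Z3) $a_A\equiv 0\pmod 4$ whenever $|A|\ge 2$ and $A\cap\{2,4\}\neq\emptyset$; (Z4) $a_A=0$ whenever $\{2,4\}\subseteq A$. An operation preserves $Z$ if applying it componentwise to elements of $Z$ yields an element of $Z$. *)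

(* Defs.v *)
From mathcomp Require Import all_boot all_order all_algebra.
Set Implicit Arguments. Unset Strict Implicit. Unset Printing Implicit Defensive.
Import GRing.Theory.
Local Open Scope ring_scope.

(* The ground set {1,2,3,4} is represented by 'I_4 with k+1 ↦ k. *)
Definition e1 : 'I_4 := @Ordinal 4 0 isT.
Definition e2 : 'I_4 := @Ordinal 4 1 isT.
Definition e3 : 'I_4 := @Ordinal 4 2 isT.
Definition e4 : 'I_4 := @Ordinal 4 3 isT.

Definition vecZ := {ffun {set 'I_4} -> 'Z_8}.

Definition gvec (A : {set 'I_4}) : vecZ := [ffun B : {set 'I_4} => (A \subset B)%:R].

Definition Zcoeffs (a : {set 'I_4} -> 'Z_8) : Prop :=
  [/\ (val (a [set e2]) %% 4 = (2 * val (a [set e1])) %% 4)%N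
      /\ (val (a [set e4]) %% 4 = (2 * val (a [set e3])) %% 4)%N,
      (forall A : {set 'I_4}, (2 <= #|A|)%N -> (2 %| val (a A))%N),
      (forall A : {set 'I_4}, (2 <= #|A|)%N -> (e2 \in A) || (e4 \in A) ->
          (4 %| val (a A))%N)
    & (forall A : {set 'I_4}, e2 \in A -> e4 \in A -> a A = 0)].

(* u ∈ Z iff u = Σ_A a_A g^A with coefficients satisfying (Z1)-(Z4)
   (the expression is unique, so this is the paper's definition). *)
Definition inZ (u : vecZ) : Prop :=
  exists a : {ffun {set 'I_4} -> 'Z_8},
    (forall B, u B = \sum_(A : {set 'I_4}) a A * gvec A B) /\ Zcoeffs a.

Definition In_set (n : nat) : {set {ffun 'I_n -> 'I_3}} :=
  [set alpha : {ffun 'I_n -> 'I_3} | (#|[set i : 'I_n | alpha i != ord0]| <= 2)%N].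

Definition monom (n : nat) (alpha : {ffun 'I_n -> 'I_3}) (x : 'I_n -> 'Z_8) : 'Z_8 :=
  \prod_(i < n) x i ^+ (val (alpha i)).

Definition fop (n : nat) (b : {ffun 'I_n -> 'I_3} -> 'Z_8) (x : 'I_n -> 'Z_8) : 'Z_8 :=
  (\prod_(i < n) x i) * \sum_(alpha in In_set n) b alpha * monom alpha x.

Definition preservesZ (n : nat) (f : ('I_n -> 'Z_8) -> 'Z_8) : Prop :=
  forall u : 'I_n -> vecZ, (forall i, inZ (u i)) ->
    inZ [ffun B : {set 'I_4} => f (fun i => u i B)].

(* Main.v *)
Require Import Defs.
From mathcomp Require Import all_boot all_order all_algebra.
From mathcomp Require Import ring.
Set Implicit Arguments. Unset Strict Implicit. Unset Printing Implicit Defensive.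
Import GRing.Theory.
Local Open Scope ring_scope.

Ltac zc x := case: x => [[|[|[|[|[|[|[|[|?]]]]]]]] ?] //.

Lemma z8 : (8 : 'Z_8) = 0. Proof. by apply/eqP; vm_compute. Qed.
Lemma zb_ev4 (x : 'Z_8) : (2 %| val x)%N ==> (4 * x == 0). Proof. by zc x; vm_compute. Qed.
Lemma zb_4ev (x : 'Z_8) : (4 * x == 0) ==> (2 %| val x)%N. Proof. by zc x; vm_compute. Qed.
Lemma zb_Z1_4 (x y : 'Z_8) : (val x %% 4 == (2 * val y) %% 4)%N ==> (4 * x == 0).
Proof. by zc x; zc y; vm_compute. Qed.
Lemma zb_Z1_N1 (x y : 'Z_8) : (val x %% 4 == (2 * val y) %% 4)%N ==> (2 * (x - 2 * y) == 0).
Proof. by zc x; zc y; vm_compute. Qed.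
Lemma zb_div4 (x : 'Z_8) : (4 %| val x)%N ==> (2 * x == 0). Proof. by zc x; vm_compute. Qed.
Lemma zb_mul (x y : 'Z_8) : (4 * x == 0) ==> (4 * y == 0) ==> (2 * (x * y) == 0).
Proof. by zc x; zc y; vm_compute. Qed.
Lemma zb_half (x : 'Z_8) : (2 %| val x)%N ==> (x == 2 * (val x %/ 2)%:R). Proof. by zc x; vm_compute. Qed.
Lemma zb_2aZ1 (x y : 'Z_8) : (4 * x == 0) ==> (val ((2 * x)%R) %% 4 == (2 * val ((2 * y)%R)) %% 4)%N.
Proof. by zc x; zc y; vm_compute. Qed.
Lemma zb_2aZ2 (x : 'Z_8) : (2 %| val ((2 * x)%R))%N. Proof. by zc x; vm_compute. Qed.
Lemma zb_2aZ3 (x : 'Z_8) : (4 * x == 0) ==> (4 %| val ((2 * x)%R))%N. Proof. by zc x; vm_compute. Qed.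
Lemma zb_LZ1 (s : 'Z_8) : (val ((2 * s)%R) %% 4 == (2 * val s) %% 4)%N. Proof. by zc s; vm_compute. Qed.

Lemma z_ev4 (x : 'Z_8) : (2 %| val x)%N -> 4 * x = 0. Proof. by move=> h; apply/eqP; move: (zb_ev4 x); rewrite h. Qed.
Lemma z_4ev (x : 'Z_8) : 4 * x = 0 -> (2 %| val x)%N. Proof. by move=> /eqP h; move: (zb_4ev x); rewrite h. Qed.
Lemma z_Z1_4 (x y : 'Z_8) : (val x %% 4 = (2 * val y) %% 4)%N -> 4 * x = 0.
Proof. by move=> /eqP h; apply/eqP; move: (zb_Z1_4 x y); rewrite h. Qed.
Lemma z_Z1_N1 (x y : 'Z_8) : (val x %% 4 = (2 * val y) %% 4)%N -> 2 * (x - 2 * y) = 0.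
Proof. by move=> /eqP h; apply/eqP; move: (zb_Z1_N1 x y); rewrite h. Qed.
Lemma z_div4 (x : 'Z_8) : (4 %| val x)%N -> 2 * x = 0. Proof. by move=> h; apply/eqP; move: (zb_div4 x); rewrite h. Qed.
Lemma z_mul (x y : 'Z_8) : 4 * x = 0 -> 4 * y = 0 -> 2 * (x * y) = 0.
Proof. by move=> /eqP h /eqP h'; apply/eqP; move: (zb_mul x y); rewrite h h'. Qed.
Lemma z_half (x : 'Z_8) : (2 %| val x)%N -> x = 2 * (val x %/ 2)%:R. Proof. by move=> h; apply/eqP; move: (zb_half x); rewrite h. Qed.
Lemma z_2aZ1 (x y : 'Z_8) : 4 * x = 0 -> (val ((2 * x)%R) %% 4 = (2 * val ((2 * y)%R)) %% 4)%N.
Proof. by move=> /eqP h; apply/eqP; move: (zb_2aZ1 x y); rewrite h. Qed.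
Lemma z_2aZ3 (x : 'Z_8) : 4 * x = 0 -> (4 %| val ((2 * x)%R))%N.
Proof. by move=> /eqP h; move: (zb_2aZ3 x); rewrite h. Qed.
Lemma z_LZ1 (s : 'Z_8) : (val ((2 * s)%R) %% 4 = (2 * val s) %% 4)%N. Proof. exact/eqP/zb_LZ1. Qed.

Lemma sum_g (a : {set 'I_4} -> 'Z_8) B :
  \sum_(A : {set 'I_4}) a A * gvec A B = \sum_(A : {set 'I_4} | A \subset B) a A.
Proof.
rewrite [RHS]big_mkcond; apply: eq_bigr => A _; rewrite /gvec ffunE.
by case: (A \subset B); rewrite ?mulr1 ?mulr0.
Qed.

Lemma sum_sub0 (a : {set 'I_4} -> 'Z_8) : \sum_(A : {set 'I_4} | A \subset set0) a A = a set0.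
Proof. under eq_bigl do rewrite subset0. by rewrite big_pred1_eq. Qed.

Lemma set1_neq0 (x : 'I_4) : [set x] != set0.
Proof. by apply/eqP=> /setP /(_ x); rewrite !inE eqxx. Qed.

Lemma sum_sub1 (a : {set 'I_4} -> 'Z_8) x :
  \sum_(A : {set 'I_4} | A \subset [set x]) a A = a set0 + a [set x].
Proof.
rewrite (bigD1 set0) ?sub0set //= (bigD1 [set x]) /= ?subxx ?set1_neq0 //.
rewrite big1 ?addr0 // => A /andP[/andP[]]; rewrite subset1.
by case/orP=> /eqP ->; rewrite eqxx.
Qed.

Lemma sub2_cases (x y : 'I_4) (A : {set 'I_4}) : A \subset [set x; y] ->
  [\/ A = set0, A = [set x], A = [set y] | A = [set x; y]].
Proof.
move=> /subsetP S.
case hx: (x \in A); case hy: (y \in A).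
- constructor 4; apply/setP => z; rewrite !inE; apply/idP/idP.
  + by move/S; rewrite !inE.
  + by case/orP => /eqP ->.
- constructor 2; apply/setP => z; rewrite !inE; apply/idP/idP.
  + move=> zA; move: (S z zA); rewrite !inE; case/orP => // /eqP ez.
    by move: hy; rewrite -ez zA.
  + by move/eqP ->.
- constructor 3; apply/setP => z; rewrite !inE; apply/idP/idP.
  + move=> zA; move: (S z zA); rewrite !inE; case/orP => // /eqP ez.
    by move: hx; rewrite -ez zA.
  + by move/eqP ->.
- constructor 1; apply/setP => z; rewrite !inE; apply/negbTE/negP => zA.
  move: (S z zA); rewrite !inE; case/orP => /eqP ez.
  + by move: hx; rewrite -ez zA.
  + by move: hy; rewrite -ez zA.
Qed.

Lemma sum_sub2 (a : {set 'I_4} -> 'Z_8) x y : x != y ->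
  \sum_(A : {set 'I_4} | A \subset [set x; y]) a A = a set0 + a [set x] + a [set y] + a [set x; y].
Proof.
move=> xy.
have xy1 : (x == y) = false by apply/negbTE.
have xy2 : (y == x) = false by rewrite eq_sym; apply/negbTE.
have n1 : [set x] != [set y] by apply/eqP=> /setP /(_ x); rewrite !inE eqxx xy1.
have n2 : [set x; y] != set0 by apply/eqP=> /setP /(_ x); rewrite !inE eqxx.
have n3 : [set x; y] != [set x] by apply/eqP=> /setP /(_ y); rewrite !inE eqxx xy2 orbT.
have n4 : [set x; y] != [set y] by apply/eqP=> /setP /(_ x); rewrite !inE eqxx xy1.
rewrite (bigD1 set0) ?sub0set //= (bigD1 [set x]) /=; last first.
  by rewrite set1_neq0 sub1set !inE eqxx.
rewrite (bigD1 [set y]) /=; last first.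
  by rewrite set1_neq0 eq_sym n1 sub1set !inE eqxx orbT.
rewrite (bigD1 [set x; y]) /=; last by rewrite subxx n2 n3 n4.
rewrite big1 ?addr0 ?addrA // => A; rewrite -!andbA => /and5P[S1 h0 h1 h2 h3].
by case: (sub2_cases S1) => E; rewrite E ?eqxx in h0 h1 h2 h3.
Qed.
Definition Ycoef (a : {set 'I_4} -> 'Z_8) :=
  (forall A : {set 'I_4}, (e2 \in A) || (e4 \in A) -> 4 * a A = 0) /\
  (forall A : {set 'I_4}, e2 \in A -> e4 \in A -> 2 * a A = 0).
Definition Yp (v : {set 'I_4} -> 'Z_8) :=
  exists a : {ffun {set 'I_4} -> 'Z_8},
    (forall B, v B = \sum_(A : {set 'I_4}) a A * gvec A B) /\ Ycoef a.

Lemma Yp_ext v w : (forall B, v B = w B) -> Yp v -> Yp w.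
Proof. by move=> E [a [Ha Ya]]; exists a; split=> // B; rewrite -E. Qed.

Lemma Yp_const k : Yp (fun _ => k).
Proof.
exists [ffun A => if A == set0 then k else 0]; split.
- move=> B; rewrite (bigD1 set0) //= big1 ?addr0.
    by rewrite ffunE eqxx /gvec ffunE sub0set mulr1.
  by move=> A /negbTE nA; rewrite ffunE nA mul0r.
- split=> A; rewrite ffunE.
  + case: eqP => [->|]; last by rewrite mulr0.
    by rewrite !inE.
  + case: eqP => [->|]; last by rewrite mulr0.
    by rewrite !inE.
Qed.

Lemma Yp_add v w : Yp v -> Yp w -> Yp (fun B => v B + w B).
Proof.
move=> [a [Ha [Ya1 Ya2]]] [c [Hc [Yc1 Yc2]]].
exists [ffun A => a A + c A]; split.
- move=> B; rewrite Ha Hc -big_split /=; apply: eq_bigr => A _.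
  by rewrite !ffunE mulrDl.
- split=> A; rewrite ffunE mulrDr.
  + by move=> h; rewrite Ya1 ?Yc1 ?addr0.
  + by move=> h1 h2; rewrite Ya2 ?Yc2 ?addr0.
Qed.

Lemma gvecU A C B : gvec A B * gvec C B = gvec (A :|: C) B.
Proof.
rewrite /gvec !ffunE subUset.
by case: (A \subset B); case: (C \subset B); rewrite /= ?mul1r ?mul0r.
Qed.

Lemma mul_aux4 (x y : 'Z_8) (b2 b4 c2 c4 : bool) :
  (b2 || b4 -> 4 * x = 0) -> (c2 || c4 -> 4 * y = 0) ->
  (b2 || c2) || (b4 || c4) -> 4 * (x * y) = 0.
Proof.
move=> hx hy h.
case: (boolP (b2 || b4)) => [/hx e|nb]; first by rewrite mulrA e mul0r.
have : c2 || c4 by clear hx hy; move: nb h; case: b2; case: b4.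
by move/hy => e; rewrite mulrCA e mulr0.
Qed.

Lemma mul_aux2 (x y : 'Z_8) (b2 b4 c2 c4 : bool) :
  (b2 || b4 -> 4 * x = 0) -> (b2 -> b4 -> 2 * x = 0) ->
  (c2 || c4 -> 4 * y = 0) -> (c2 -> c4 -> 2 * y = 0) ->
  (b2 || c2) -> (b4 || c4) -> 2 * (x * y) = 0.
Proof.
move=> hx1 hx2 hy1 hy2.
case: b2 hx1 hx2; case: b4; case: c2 hy1 hy2; case: c4 => //= hy1 hy2 hx1 hx2 _ _;
  try (by rewrite mulrA hx2 // mul0r); try (by rewrite mulrCA hy2 // mulr0);
  by apply: z_mul; [apply: hx1|apply: hy1].
Qed.

Lemma Yp_mul v w : Yp v -> Yp w -> Yp (fun B => v B * w B).
Proof.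
move=> [a [Ha [Ya1 Ya2]]] [c [Hc [Yc1 Yc2]]].
exists [ffun D => \sum_(p : {set 'I_4} * {set 'I_4} | p.1 :|: p.2 == D) a p.1 * c p.2]; split.
- move=> B; rewrite Ha Hc big_distrlr /=.
  rewrite (eq_bigr (fun A => \sum_(C : {set 'I_4}) a A * c C * gvec (A :|: C) B)); last first.
    move=> A _; apply: eq_bigr => C _.
    by rewrite -gvecU; ring.
  rewrite pair_big /= (partition_big (fun p : {set 'I_4} * {set 'I_4} => p.1 :|: p.2) xpredT) //=.
  apply: eq_bigr => D _; rewrite ffunE mulr_suml; apply: eq_bigr => p /eqP <-.
  by [].
- split=> D.
  + move=> hD; rewrite ffunE mulr_sumr big1 // => p /eqP E.
    move: hD; rewrite -E !in_setU => hD.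
    apply: (mul_aux4 (b2 := e2 \in p.1) (b4 := e4 \in p.1) (c2 := e2 \in p.2) (c4 := e4 \in p.2));
      first [exact: Ya1 | exact: Yc1 | by move: hD; case: (e2 \in p.1); case: (e4 \in p.1); case: (e2 \in p.2); case: (e4 \in p.2)].
  + move=> h2 h4; rewrite ffunE mulr_sumr big1 // => p /eqP E.
    move: h2 h4; rewrite -E !in_setU => h2 h4.
    apply: (mul_aux2 (b2 := e2 \in p.1) (b4 := e4 \in p.1) (c2 := e2 \in p.2) (c4 := e4 \in p.2));
      first [exact: Ya1 | exact: Ya2 | exact: Yc1 | exact: Yc2 | done].
Qed.

Lemma Yp_sum (I : Type) (r : seq I) (P : pred I) (F : I -> {set 'I_4} -> 'Z_8) :
  (forall i, P i -> Yp (F i)) -> Yp (fun B => \sum_(i <- r | P i) F i B).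
Proof.
move=> H; elim: r => [|x r IH].
  by apply: (Yp_ext (v := fun _ => 0)); [move=> B; rewrite big_nil | apply: Yp_const].
case: (boolP (P x)) => Px.
  apply: (Yp_ext (v := fun B => F x B + \sum_(i <- r | P i) F i B)).
    by move=> B; rewrite big_cons Px.
  exact: Yp_add (H x Px) IH.
apply: Yp_ext IH => B; by rewrite big_cons (negbTE Px).
Qed.

Lemma Yp_prod (I : Type) (r : seq I) (P : pred I) (F : I -> {set 'I_4} -> 'Z_8) :
  (forall i, P i -> Yp (F i)) -> Yp (fun B => \prod_(i <- r | P i) F i B).
Proof.
move=> H; elim: r => [|x r IH].
  by apply: (Yp_ext (v := fun _ => 1)); [move=> B; rewrite big_nil | apply: Yp_const].
case: (boolP (P x)) => Px.
  apply: (Yp_ext (v := fun B => F x B * \prod_(i <- r | P i) F i B)).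
    by move=> B; rewrite big_cons Px.
  exact: Yp_mul (H x Px) IH.
apply: Yp_ext IH => B; by rewrite big_cons (negbTE Px).
Qed.

Lemma Yp_exp v k : Yp v -> Yp (fun B => v B ^+ k).
Proof.
move=> hv; elim: k => [|k IH].
  by apply: (Yp_ext (v := fun _ => 1)); [move=> B; rewrite expr0 | apply: Yp_const].
apply: (Yp_ext (v := fun B => v B * v B ^+ k)); first by move=> B; rewrite exprS.
exact: Yp_mul.
Qed.

Lemma inZ_Yp (u : vecZ) : inZ u -> Yp (fun B => u B).
Proof.
move=> [a [Ha [[Z1a Z1b] Z2 Z3 Z4]]]; exists a; split=> //; split=> A.
- move=> hA; case: (leqP 2 #|A|) => [c2|c1]; first exact/z_ev4/Z2.
  have c1' : #|A| = 1%N.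
    apply/eqP; rewrite eqn_leq -ltnS c1 /= card_gt0; apply/set0Pn.
    by case/orP: hA => h; [exists e2|exists e4].
  move/eqP/cards1P: c1' => [x Ex]; move: hA; rewrite Ex !inE => /orP[] /eqP <-.
  + exact: z_Z1_4 Z1a.
  + exact: z_Z1_4 Z1b.
- by move=> h2 h4; rewrite Z4 // mulr0.
Qed.

Lemma Yp_2 v : Yp v -> inZ [ffun B => 2 * v B].
Proof.
move=> [a [Ha [Y1 Y2]]]; exists [ffun A => 2 * a A]; split.
- move=> B; rewrite !ffunE Ha mulr_sumr; apply: eq_bigr => A _.
  by rewrite !ffunE mulrA.
- split.
  + split; rewrite !ffunE; apply: z_2aZ1; apply: Y1; by rewrite !inE eqxx ?orbT.
  + by move=> A _; rewrite ffunE zb_2aZ2.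
  + by move=> A _ h; rewrite ffunE; apply/z_2aZ3/Y1.
  + by move=> A h2 h4; rewrite ffunE Y2.
Qed.

Lemma suff_dir (n : nat) (b : {ffun 'I_n -> 'I_3} -> 'Z_8) :
  (forall alpha, alpha \in In_set n -> (2 %| val (b alpha))%N) -> preservesZ (fop b).
Proof.
move=> hb u Hu.
pose b' alpha := ((val (b alpha)) %/ 2)%:R : 'Z_8.
pose h B := \prod_(i < n) u i B *
            \sum_(alpha in In_set n) b' alpha * monom alpha (fun i => u i B).
have -> : [ffun B => fop b (fun i => u i B)] = [ffun B => 2 * h B].
  apply/ffunP => B; rewrite !ffunE /fop /h.
  rewrite (eq_bigr (fun alpha => 2 * (b' alpha * monom alpha (fun i => u i B)))); last first.
    by move=> alpha ha; rewrite mulrA -z_half // hb.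
  by rewrite -mulr_sumr mulrCA.
apply: Yp_2; rewrite /h.
apply: Yp_mul.
  apply: (@Yp_prod _ _ _ (fun i B => u i B)) => i _; exact: inZ_Yp.
apply: (@Yp_sum _ _ _ (fun alpha B => b' alpha * monom alpha (fun i => u i B))) => alpha _.
apply: Yp_mul; first exact: Yp_const.
apply: (@Yp_prod _ _ _ (fun i B => u i B ^+ val (alpha i))) => i _.
exact/Yp_exp/inZ_Yp.
Qed.
Definition Lvec (c s t : 'Z_8) : vecZ :=
  [ffun B : {set 'I_4} => c + s * ((e1 \in B)%:R + 2 * (e2 \in B)%:R) + t * ((e3 \in B)%:R + 2 * (e4 \in B)%:R)].

Lemma set1_eq (x y : 'I_4) : ([set x] == [set y]) = (x == y).
Proof.
apply/eqP/eqP => [/setP /(_ x)|-> //]; rewrite !inE eqxx.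
by move/esym/eqP.
Qed.

Definition aL (c s t : 'Z_8) : {ffun {set 'I_4} -> 'Z_8} :=
  [ffun A : {set 'I_4} => if A == set0 then c else if A == [set e1] then s else if A == [set e2] then 2 * s
    else if A == [set e3] then t else if A == [set e4] then 2 * t else 0].

Lemma aL_big c s t (A : {set 'I_4}) : (2 <= #|A|)%N -> aL c s t A = 0.
Proof.
rewrite ffunE; case: eqP => [->|_]; first by rewrite cards0.
case: eqP => [->|_]; first by rewrite cards1.
case: eqP => [->|_]; first by rewrite cards1.
case: eqP => [->|_]; first by rewrite cards1.
case: eqP => [->|_]; first by rewrite cards1.
by [].
Qed.

Lemma aL_24 c s t (A : {set 'I_4}) : e2 \in A -> e4 \in A -> aL c s t A = 0.
Proof.
move=> h2 h4; rewrite ffunE; case: eqP => [E|_]; first by move: h2; rewrite E inE.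
case: eqP => [E|_]; first by move: h2; rewrite E inE.
case: eqP => [E|_]; first by move: h4; rewrite E inE.
case: eqP => [E|_]; first by move: h2; rewrite E inE.
case: eqP => [E|_]; first by move: h2; rewrite E inE.
by [].
Qed.

Lemma neq_sets :
  [/\ [set e1] != set0, [set e2] != set0, [set e3] != set0 & [set e4] != set0] /\
  [/\ [set e1] != [set e2], [set e1] != [set e3] & [set e1] != [set e4]] /\
  [/\ [set e2] != [set e3], [set e2] != [set e4] & [set e3] != [set e4]].
Proof. by rewrite !set1_eq !set1_neq0. Qed.

Lemma inZ_Lvec c s t : inZ (Lvec c s t).
Proof.
have [[n1 n2 n3 n4] [[n12 n13 n14] [n23 n24 n34]]] := neq_sets.
exists (aL c s t); split.
- move=> B; rewrite (bigD1 set0) //= (bigD1 [set e1]) /=; last by rewrite n1.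
  rewrite (bigD1 [set e2]) /=; last by rewrite n2 eq_sym n12.
  rewrite (bigD1 [set e3]) /=; last by rewrite n3 eq_sym n13 eq_sym n23.
  rewrite (bigD1 [set e4]) /=; last by rewrite n4 eq_sym n14 eq_sym n24 eq_sym n34.
  rewrite big1; last first.
    move=> A; rewrite -!andbA => /and5P[/negbTE h0 /negbTE h1 /negbTE h2 /negbTE h3 /negbTE h4].
    by rewrite ffunE h0 h1 h2 h3 h4 mul0r.
  rewrite !ffunE eqxx (negbTE n1) (negbTE n2) (negbTE n3) (negbTE n4) !eqxx.
  rewrite !set1_eq /=.
  rewrite sub0set !sub1set /=.
  ring.
- split.
  + split; rewrite !ffunE ?eqxx ?(negbTE n1) ?(negbTE n2) ?(negbTE n3) ?(negbTE n4)
      !set1_eq /=; exact: z_LZ1.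
  + by move=> A hA; rewrite aL_big.
  + by move=> A hA _; rewrite aL_big.
  + by move=> A h2 h4; rewrite aL_24.
Qed.

Lemma N1 (w : vecZ) : inZ w -> 2 * (w [set e2] - 2 * w [set e1] + w set0) = 0.
Proof.
move=> [a [Ha [[Z1a Z1b] Z2 Z3 Z4]]].
rewrite !Ha !sum_g !sum_sub1 sum_sub0.
have := z_Z1_N1 Z1a => h.
rewrite -h; ring.
Qed.

Lemma N3 (w : vecZ) : inZ w -> 2 * (w [set e1; e4] - w [set e1] - w [set e4] + w set0) = 0.
Proof.
move=> [a [Ha [[Z1a Z1b] Z2 Z3 Z4]]].
rewrite !Ha !sum_g sum_sub2 // !sum_sub1 sum_sub0.
have h : 2 * a [set e1; e4] = 0.
  apply: z_div4; apply: Z3; first by rewrite cards2.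
  by rewrite !inE eqxx orbT.
rewrite -h; ring.
Qed.

Lemma N4 (w : vecZ) : inZ w -> w [set e2; e4] - w [set e2] - w [set e4] + w set0 = 0.
Proof.
move=> [a [Ha [[Z1a Z1b] Z2 Z3 Z4]]].
rewrite !Ha !sum_g sum_sub2 // !sum_sub1 sum_sub0.
have h : a [set e2; e4] = 0 by apply: Z4; rewrite !inE eqxx ?orbT.
rewrite -h; ring.
Qed.

Definition o0 : 'I_3 := @Ordinal 3 0 isT.
Definition o1 : 'I_3 := @Ordinal 3 1 isT.
Definition o2 : 'I_3 := @Ordinal 3 2 isT.

Definition G (Bc : 'I_3 -> 'I_3 -> 'Z_8) (x y : 'Z_8) : 'Z_8 :=
  x * y * \sum_(i < 3) \sum_(j < 3) Bc i j * x ^+ i * y ^+ j.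

Lemma sum3 (F : 'I_3 -> 'Z_8) : \sum_(i < 3) F i = F o0 + F o1 + F o2.
Proof.
rewrite !big_ord_recl big_ord0 addr0 !addrA; congr (F _ + F _ + F _); exact/val_inj.
Qed.

Lemma LvE c s t B : Lvec c s t B =
  c + s * ((e1 \in B)%:R + 2 * (e2 \in B)%:R) + t * ((e3 \in B)%:R + 2 * (e4 \in B)%:R).
Proof. by rewrite ffunE. Qed.

Section Base.
Variable Bc : 'I_3 -> 'I_3 -> 'Z_8.
Hypothesis Hp : forall u1 u2 : vecZ, inZ u1 -> inZ u2 ->
  inZ [ffun B => G Bc (u1 B) (u2 B)].

Definition gg c1 s1 t1 c2 s2 t2 (x y : 'Z_8) :=
  G Bc (c1 + s1 * x + t1 * y) (c2 + s2 * x + t2 * y).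

Lemma SN1 c1 s1 t1 c2 s2 t2 :
  2 * (gg c1 s1 t1 c2 s2 t2 2 0 - 2 * gg c1 s1 t1 c2 s2 t2 1 0 + gg c1 s1 t1 c2 s2 t2 0 0) = 0.
Proof.
have := N1 (Hp (inZ_Lvec c1 s1 t1) (inZ_Lvec c2 s2 t2)).
rewrite !ffunE !inE /gg /=.
by rewrite !(mul0r, mulr0, mulr1, add0r, addr0).
Qed.

Lemma SN3 c1 s1 t1 c2 s2 t2 :
  2 * (gg c1 s1 t1 c2 s2 t2 1 2 - gg c1 s1 t1 c2 s2 t2 1 0 - gg c1 s1 t1 c2 s2 t2 0 2
       + gg c1 s1 t1 c2 s2 t2 0 0) = 0.
Proof.
have := N3 (Hp (inZ_Lvec c1 s1 t1) (inZ_Lvec c2 s2 t2)).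
rewrite !ffunE !inE /gg /=.
by rewrite !(mul0r, mulr0, mulr1, add0r, addr0).
Qed.

Lemma SN4 c1 s1 t1 c2 s2 t2 :
  gg c1 s1 t1 c2 s2 t2 2 2 - gg c1 s1 t1 c2 s2 t2 2 0 - gg c1 s1 t1 c2 s2 t2 0 2
       + gg c1 s1 t1 c2 s2 t2 0 0 = 0.
Proof.
have := N4 (Hp (inZ_Lvec c1 s1 t1) (inZ_Lvec c2 s2 t2)).
rewrite !ffunE !inE /gg /=.
by rewrite !(mul0r, mulr0, mulr1, add0r, addr0).
Qed.

Lemma eq8 (x y K : 'Z_8) : x = y + 8 * K -> x = y.
Proof. by move=> ->; rewrite z8 mul0r addr0. Qed.

Lemma T00 : 4 * (Bc o0 o0) = 0.
Proof.
have H := SN4 0 0 1 0 1 0.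
rewrite -H; apply: (@eq8 _ _ ((0) * Bc o0 o0 + (-1) * Bc o0 o1 + (-2) * Bc o0 o2 + (-1) * Bc o1 o0 + (-2) * Bc o1 o1 + (-4) * Bc o1 o2 + (-2) * Bc o2 o0 + (-4) * Bc o2 o1 + (-8) * Bc o2 o2)).
rewrite /gg /G !sum3 /=; ring.
Qed.

Lemma T02 : 4 * (Bc o0 o0 + Bc o0 o2) = 0.
Proof.
have H := SN4 0 0 1 1 1 0.
rewrite -H; apply: (@eq8 _ _ ((0) * Bc o0 o0 + (-2) * Bc o0 o1 + (-6) * Bc o0 o2 + (-1) * Bc o1 o0 + (-4) * Bc o1 o1 + (-13) * Bc o1 o2 + (-2) * Bc o2 o0 + (-8) * Bc o2 o1 + (-26) * Bc o2 o2)).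
rewrite /gg /G !sum3 /=; ring.
Qed.

Lemma T20 : 4 * (Bc o0 o0 + Bc o2 o0) = 0.
Proof.
have H := SN4 1 0 1 0 1 0.
rewrite -H; apply: (@eq8 _ _ ((0) * Bc o0 o0 + (-1) * Bc o0 o1 + (-2) * Bc o0 o2 + (-2) * Bc o1 o0 + (-4) * Bc o1 o1 + (-8) * Bc o1 o2 + (-6) * Bc o2 o0 + (-13) * Bc o2 o1 + (-26) * Bc o2 o2)).
rewrite /gg /G !sum3 /=; ring.
Qed.

Lemma T01 : 4 * (Bc o0 o0 + Bc o0 o1 + Bc o0 o2) = 0.
Proof.
have H := SN3 0 0 1 0 1 0.
rewrite -H; apply: (@eq8 _ _ ((0) * Bc o0 o0 + (0) * Bc o0 o1 + (0) * Bc o0 o2 + (-1) * Bc o1 o0 + (-1) * Bc o1 o1 + (-1) * Bc o1 o2 + (-2) * Bc o2 o0 + (-2) * Bc o2 o1 + (-2) * Bc o2 o2)).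
rewrite /gg /G !sum3 /=; ring.
Qed.

Lemma T10 : 4 * (Bc o0 o0 + Bc o1 o0 + Bc o2 o0) = 0.
Proof.
have H := SN3 0 1 0 0 0 1.
rewrite -H; apply: (@eq8 _ _ ((0) * Bc o0 o0 + (-1) * Bc o0 o1 + (-2) * Bc o0 o2 + (0) * Bc o1 o0 + (-1) * Bc o1 o1 + (-2) * Bc o1 o2 + (0) * Bc o2 o0 + (-1) * Bc o2 o1 + (-2) * Bc o2 o2)).
rewrite /gg /G !sum3 /=; ring.
Qed.

Lemma T2x : 4 * (Bc o2 o0 + Bc o2 o1 + Bc o2 o2) = 0.
Proof.
have H := SN3 0 1 1 1 0 0.
rewrite -H; apply: (@eq8 _ _ ((0) * Bc o0 o0 + (0) * Bc o0 o1 + (0) * Bc o0 o2 + (-1) * Bc o1 o0 + (-1) * Bc o1 o1 + (-1) * Bc o1 o2 + (-4) * Bc o2 o0 + (-4) * Bc o2 o1 + (-4) * Bc o2 o2)).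
rewrite /gg /G !sum3 /=; ring.
Qed.

Lemma Tx2 : 4 * (Bc o0 o2 + Bc o1 o2 + Bc o2 o2) = 0.
Proof.
have H := SN3 1 0 0 0 1 1.
rewrite -H; apply: (@eq8 _ _ ((0) * Bc o0 o0 + (-1) * Bc o0 o1 + (-4) * Bc o0 o2 + (0) * Bc o1 o0 + (-1) * Bc o1 o1 + (-4) * Bc o1 o2 + (0) * Bc o2 o0 + (-1) * Bc o2 o1 + (-4) * Bc o2 o2)).
rewrite /gg /G !sum3 /=; ring.
Qed.

Lemma Tx1 : 4 * (Bc o0 o1 + Bc o1 o1 + Bc o2 o1) = 0.
Proof.
have H := SN1 1 0 0 1 1 0.
rewrite -H; apply: (@eq8 _ _ ((0) * Bc o0 o0 + (0) * Bc o0 o1 + (-3) * Bc o0 o2 + (0) * Bc o1 o0 + (0) * Bc o1 o1 + (-3) * Bc o1 o2 + (0) * Bc o2 o0 + (0) * Bc o2 o1 + (-3) * Bc o2 o2)).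
rewrite /gg /G !sum3 /=; ring.
Qed.

Lemma T22 : 4 * (Bc o0 o0 + Bc o0 o2 + Bc o2 o0 + Bc o2 o2) = 0.
Proof.
have H := SN4 1 0 1 1 1 0.
rewrite -H; apply: (@eq8 _ _ ((0) * Bc o0 o0 + (-2) * Bc o0 o1 + (-6) * Bc o0 o2 + (-2) * Bc o1 o0 + (-8) * Bc o1 o1 + (-26) * Bc o1 o2 + (-6) * Bc o2 o0 + (-26) * Bc o2 o1 + (-84) * Bc o2 o2)).
rewrite /gg /G !sum3 /=; ring.
Qed.


Lemma ord3 (i : 'I_3) : [\/ i = o0, i = o1 | i = o2].
Proof.
case: i => [[|[|[|m]]] Hm] //; [constructor 1|constructor 2|constructor 3]; exact/val_inj.
Qed.

Lemma base_all i j : 4 * Bc i j = 0.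
Proof.
have h00 := T00.
have h02 := T02; rewrite !mulrDr h00 ?add0r ?addr0 in h02.
have h20 := T20; rewrite !mulrDr h00 ?add0r ?addr0 in h20.
have h01 := T01; rewrite !mulrDr h00 h02 ?add0r ?addr0 in h01.
have h10 := T10; rewrite !mulrDr h00 h20 ?add0r ?addr0 in h10.
have h22 := T22; rewrite !mulrDr h00 h02 h20 ?add0r ?addr0 in h22.
have h21 := T2x; rewrite !mulrDr h20 h22 ?add0r ?addr0 in h21.
have h12 := Tx2; rewrite !mulrDr h02 h22 ?add0r ?addr0 in h12.
have h11 := Tx1; rewrite !mulrDr h01 h21 ?add0r ?addr0 in h11.
by case: (ord3 i) => ->; case: (ord3 j) => ->.
Qed.
End Base.
Section Nec.
Variable n : nat.
Variable b : {ffun 'I_n -> 'I_3} -> 'Z_8.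

Definition Bc (k l : 'I_n) (i j : 'I_3) : 'Z_8 :=
  \sum_(alpha in In_set n | (alpha k, alpha l) == (i, j)) b alpha.

Lemma prod_kl (k l : 'I_n) (F : 'I_n -> 'Z_8) : k != l ->
  (forall m, m != k -> m != l -> F m = 1) -> \prod_(i < n) F i = F k * F l.
Proof.
move=> kl H; rewrite (bigD1 k) //= (bigD1 l) /=; last by rewrite eq_sym.
rewrite big1 ?mulr1 // => m /andP[mk ml]; exact: H.
Qed.

Lemma fop_red (k l : 'I_n) (x : 'I_n -> 'Z_8) : k != l ->
  (forall m, m != k -> m != l -> x m = 1) ->
  fop b x = G (Bc k l) (x k) (x l).
Proof.
move=> kl H; rewrite /fop (prod_kl kl H) /G.
congr (_ * _).
rewrite pair_big /= (partition_big (fun alpha : {ffun 'I_n -> 'I_3} => (alpha k, alpha l)) xpredT) //=.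
apply: eq_bigr => q _; rewrite /Bc mulr_suml mulr_suml; apply: eq_bigr => alpha /andP[_ /eqP E].
rewrite /monom (prod_kl (F := fun i => x i ^+ alpha i) kl); last first.
  by move=> m mk ml /=; rewrite H // expr1n.
by rewrite -E /= mulrA.
Qed.

Hypothesis HP : preservesZ (fop b).

Lemma Lvec1 B : Lvec 1 0 0 B = 1.
Proof. by rewrite ffunE !mul0r !addr0. Qed.

Lemma Bc_even (k l : 'I_n) : k != l -> forall i j, 4 * Bc k l i j = 0.
Proof.
move=> kl; apply: base_all => u1 u2 h1 h2.
pose u (m : 'I_n) := if m == k then u1 else if m == l then u2 else Lvec 1 0 0.
have hu : forall m, inZ (u m).
  by move=> m; rewrite /u; case: (m == k) => //; case: (m == l) => //; exact: inZ_Lvec.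
have := HP hu.
have -> : [ffun B => fop b (fun i => u i B)] = [ffun B => G (Bc k l) (u1 B) (u2 B)]; last by [].
apply/ffunP => B; rewrite !ffunE (fop_red (k := k) (l := l)) //.
  by rewrite /u eqxx eq_sym (negbTE kl) eqxx.
by move=> m mk ml; rewrite /u (negbTE mk) (negbTE ml) Lvec1.
Qed.

Lemma ex_diff (g h : {ffun 'I_n -> 'I_3}) : g != h -> exists m, g m != h m.
Proof.
move=> ne; case: (boolP [exists m, g m != h m]) => [/existsP //|/existsPn H].
by case/negP: ne; apply/eqP/ffunP => m; apply/eqP; move: (H m); rewrite negbK.
Qed.

Lemma isolate (k l : 'I_n) (beta : {ffun 'I_n -> 'I_3}) : k != l ->
  beta \in In_set n ->
  (forall g, g \in In_set n -> g k = beta k -> g l = beta l -> g != beta -> 4 * b g = 0) ->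
  4 * b beta = 0.
Proof.
move=> kl hb H.
have := Bc_even kl (beta k) (beta l).
rewrite /Bc (bigD1 beta) /=; last by rewrite hb eqxx.
rewrite mulrDr mulr_sumr big1 ?addr0 // => g /andP[/andP[hg /eqP E] ne].
by case: E => E1 E2; apply: H.
Qed.

Lemma supp3 (g : {ffun 'I_n -> 'I_3}) (k l m : 'I_n) : g \in In_set n ->
  k != l -> m != k -> m != l -> g k != ord0 -> g l != ord0 -> g m = ord0.
Proof.
move=> hg kl mk ml gk gl; apply/eqP; apply: contraTT hg => gm.
rewrite /In_set inE -ltnNge.
have sub : m |: [set k; l] \subset [set i | g i != ord0].
  by apply/subsetP => z; rewrite !inE => /orP[/eqP->|/orP[]/eqP->].
apply: leq_trans (subset_leq_card sub).
rewrite cardsU1 cards2 kl !inE negb_or mk ml.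
by [].
Qed.

Lemma step2 (g : {ffun 'I_n -> 'I_3}) (k m : 'I_n) : g \in In_set n -> k != m ->
  g k != ord0 -> g m != ord0 -> 4 * b g = 0.
Proof.
move=> hg km gk gm; apply: (isolate km hg) => h hh E1 E2 ne.
case: (ex_diff ne) => z hz.
have zk : z != k by apply: contraNneq hz => ->; rewrite E1.
have zm : z != m by apply: contraNneq hz => ->; rewrite E2.
rewrite (supp3 hh (k := k) (l := m)) ?E1 ?E2 // in hz.
by rewrite (supp3 hg (k := k) (l := m)) // eqxx in hz.
Qed.

Variable oth : 'I_n -> 'I_n.
Hypothesis oth_ne : forall k, k != oth k.

Lemma step1 (g : {ffun 'I_n -> 'I_3}) (k : 'I_n) : g \in In_set n ->
  g k != ord0 -> 4 * b g = 0.
Proof.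
move=> hg gk.
case: (boolP [exists m, (m != k) && (g m != ord0)]) => [/existsP [m /andP[mk gm]]|/existsPn H].
  by apply: (step2 hg _ gk gm); rewrite eq_sym.
have Hz : forall m, m != k -> g m = ord0.
  by move=> m mk; move: (H m); rewrite mk /= negbK => /eqP.
apply: (isolate (oth_ne k) hg) => h hh E1 E2 ne.
case: (ex_diff ne) => z hz.
have zk : z != k by apply: contraNneq hz => ->; rewrite E1.
apply: (step2 hh zk); last by rewrite E1.
by move: hz; rewrite (Hz z zk).
Qed.

Lemma step0 (g : {ffun 'I_n -> 'I_3}) : g \in In_set n -> (exists k : 'I_n, true) -> 4 * b g = 0.
Proof.
move=> hg [k _].
case: (boolP [exists m, g m != ord0]) => [/existsP [m gm]|/existsPn H].
  exact: step1 hg gm.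
apply: (isolate (oth_ne k) hg) => h hh E1 E2 ne.
case: (ex_diff ne) => z hz.
apply: (step1 hh (k := z)).
by move: hz; move: (H z); rewrite negbK => /eqP ->.
Qed.

End Nec.

Unset Implicit Arguments.

Theorem theorem3p1 (n : nat) (b : {ffun 'I_n -> 'I_3} -> 'Z_8) :
  (2 <= n)%N ->
  (preservesZ (fop b) <->
   (forall alpha, alpha \in In_set n -> (2 %| val (b alpha))%N)).
Proof.
move=> n2; split; last exact: suff_dir.
move=> HP alpha ha; apply: z_4ev.
have h0 : (0 < n)%N by apply: leq_trans n2.
pose i0 : 'I_n := Ordinal h0.
pose i1 : 'I_n := Ordinal n2.
pose oth (k : 'I_n) := if k == i0 then i1 else i0.
have oth_ne : forall k, k != oth k.
  by move=> k; rewrite /oth; case: (eqVneq k i0) => [->|ne].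
exact: (step0 HP oth_ne ha (ex_intro _ i0 isT)).
Qed.
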